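(* Let $\mathbb V,\mathbb W$ be separable Banach spaces, $\mathcal P_N^{\mathbb V},\mathcal P_N^{\mathbb W}$ finite-dimensional projections converging strongly to the identity on $\mathbb V,\mathbb W$, and let $\mathcal L=\mathcal L_0+\mathcal L_1$, $\mathcal N=\mathcal N_0+\mathcal N_1$, $\mathcal N_{1,N}$, $\mathcal K_N$, $\mathcal K$ satisfy all of the following: $\mathcal L:\mathbb V\to\mathbb W$ is admissible and invertible with invertible left-Fredholm regulator $\mathcal N$, $\mathcal N\mathcal L=\mathrm{id}-\mathcal K$ with $\mathcal K$ compact; $\mathcal N_{1,N}:\operatorname{ran}\mathcal P_N^{\mathbb W}\to\operatorname{ran}\mathcal P_N^{\mathbb V}$ and $\mathcal K_N:\mathbb V\to\mathbb V$ satisfy $(\mathcal N_0+\mathcal N_{1,N})(\mathcal L_0+\mathcal P_N^{\mathbb W}\mathcal L_1)=\mathrm{id}-\mathcal K_N$ on $\operatorname{ran}\mathcal P_N^{\mathbb V}$ and $\|\mathcal K_N-\mathcal K\|_{\mathbb V}\to0$; and $\dim\operatorname{ran}\mathcal P_N^{\mathbb V}=\dim\operatorname{ran}\mathcal P_N^{\mathbb W}$. Let $\mathbb W'\subset\mathbb W$ be a dense subspace and $\mathcal I_N^{\mathbb W}$ projections with $\|u-\mathcal I_N^{\mathbb W}u\|_{\mathbb W}\to0$ for every $u\in\mathbb W'$ and $\mathcal I_N^{\mathbb W}\mathbb W'=\operatorname{ran}\mathcal P_N^{\mathbb W}$. Suppose that, for sufficiently large $N$, $\mathcal L_0+\mathcal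 I_N^{\mathbb W}\mathcal L_1:\operatorname{ran}\mathcal P_N^{\mathbb V}\to\operatorname{ran}\mathcal P_N^{\mathbb W}$ is invertible. Then for $f\in\mathbb W'$ and such $N$, $$\|(\mathcal L_0+\mathcal P_N^{\mathbb W}\mathcal L_1)^{-1}\mathcal P_N^{\mathbb W}f-(\mathcal L_0+\mathcal I_N^{\mathbb W}\mathcal L_1)^{-1}\mathcal I_N^{\mathbb W}f\|_{\mathbb V}\le\|(\mathcal L_0+\mathcal I_N^{\mathbb W}\mathcal L_1)^{-1}\|_{\operatorname{ran}\mathcal I_N^{\mathbb W}\to\operatorname{ran}\mathcal P_N^{\mathbb V}}\,\|(\mathcal I_N^{\mathbb W}-\mathcal P_N^{\mathbb W})(f-\mathcal L_1u_N)\|_{\mathbb W},$$ where $u_N=(\mathcal L_0+\mathcal P_N^{\mathbb W}\mathcal L_1)^{-1}\mathcal P_N^{\mathbb W}f$.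
   Context: A bounded linear operator $\mathcal L:\mathbb V\to\mathbb W$ is left Fredholm with regulator $\mathcal N:\mathbb W\to\mathbb V$ if $\mathcal N\mathcal L=\mathrm{id}-\mathcal K$ with $\mathcal K$ compact on $\mathbb V$. It is admissible if $\mathcal L=\mathcal L_0+\mathcal L_1$ with $\mathcal L_0\mathcal P_N^{\mathbb V}=\mathcal P_N^{\mathbb W}\mathcal L_0$, $\mathcal L$ is left Fredholm with regulator $\mathcal N$, and $\mathcal N=\mathcal N_0+\mathcal N_1$ with $\mathcal N_0\mathcal P_N^{\mathbb W}=\mathcal P_N^{\mathbb V}\mathcal N_0$. *)

(* Defs.v *)
From HB Require Import structures.
From mathcomp Require Import all_boot all_order all_algebra.
From mathcomp Require Import all_classical all_reals all_analysis.
Set Implicit Arguments. Unset Strict Implicit. Unset Printing Implicit Defensive.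
Import Order.TTheory GRing.Theory Num.Theory.
Import numFieldNormedType.Exports.
Local Open Scope classical_set_scope.
Local Open Scope ring_scope.

(* Conventions: all spaces are (real) normed spaces over R : realType;
   operators are represented as total functions with explicit predicates. *)

Section Defs.
Variable R : realType.

Definition separable (V : normedModType R) : Prop :=
  exists D : set V, countable D /\ dense D.

Definition bounded_linear (V W : normedModType R) (T : V -> W) : Prop :=
  linear T /\ continuous T.

Definition lin_subspace (V : normedModType R) (S : set V) : Prop :=
  S 0 /\ forall (a : R) (x y : V), S x -> S y -> S (a *: x + y).

Definition opnorm_on (V W : normedModType R) (S : set V) (T : V -> W) : R :=
  sup [set r : R | exists2 x, S x /\ x != 0 & r = `|T x| / `|x|].

(* operator norm of the inverse of A : S -> T (A a bijection S -> T):
   sup over nonzero w in T of ||A^{-1} w|| / ||w||, written relationally *)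
Definition inv_opnorm (V W : normedModType R) (A : V -> W) (S : set V) (T : set W) : R :=
  sup [set r : R | exists x y, [/\ S x, T y, y != 0, A x = y & r = `|x| / `|y|]].

Definition compact_op (V W : normedModType R) (K : V -> W) : Prop :=
  bounded_linear K /\ compact (closure (K @` ball (0 : V) 1)).

Definition bij_between (V W : normedModType R) (A : V -> W) (S : set V) (T : set W) : Prop :=
  [/\ (forall x, S x -> T (A x)),
      (forall y, T y -> exists2 x, S x & A x = y) &
      (forall x y, S x -> S y -> A x = A y -> x = y)].

Definition basis_of (V : normedModType R) (S : set V) (n : nat) (b : 'I_n -> V) : Prop :=
  (forall c : 'I_n -> R, \sum_(i < n) c i *: b i = 0 -> forall i, c i = 0) /\
  S = [set \sum_(i < n) c i *: b i | c in [set: 'I_n -> R]].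

Definition finite_dim (V : normedModType R) (S : set V) : Prop :=
  exists n (b : 'I_n -> V), basis_of S b.

Definition same_dim (V W : normedModType R) (S : set V) (T : set W) : Prop :=
  exists n (b : 'I_n -> V) (b' : 'I_n -> W), basis_of S b /\ basis_of T b'.

Definition fd_proj_family (V : normedModType R) (P : nat -> V -> V) : Prop :=
  forall N, [/\ bounded_linear (P N), (forall x, P N (P N x) = P N x),
     finite_dim (range (P N)) & forall x, (fun M => P M x) @ \oo --> x].

Definition left_fredholm (V W : normedModType R) (L : V -> W) (Nr : W -> V) : Prop :=
  exists K : V -> V, compact_op K /\ forall x, Nr (L x) = x - K x.

Definition admissible (V W : normedModType R) (PV : nat -> V -> V) (PW : nat -> W -> W)
  (L L0 L1 : V -> W) (Nr N0 N1 : W -> V) : Prop :=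
  [/\ linear L0, linear L1, (forall x, L x = L0 x + L1 x) &
      (forall N x, L0 (PV N x) = PW N (L0 x))] /\
  left_fredholm L Nr /\
  [/\ linear N0, linear N1, (forall y, Nr y = N0 y + N1 y) &
      (forall N y, N0 (PW N y) = PV N (N0 y))].

End Defs.

(* Main.v *)
Require Import Defs.
From HB Require Import structures.
From mathcomp Require Import all_boot all_order all_algebra.
From mathcomp Require Import all_classical all_reals all_analysis.
From mathcomp Require Import ring lra.
Import Order.TTheory GRing.Theory Num.Theory.
Import numFieldNormedType.Exports.
Import Order.TTheory GRing.Theory Num.Theory.
Import numFieldNormedType.Exports.
Local Open Scope classical_set_scope.
Local Open Scope ring_scope.

Section Helpers.
Variable R : realType.

Section Lin.
Variables (V W : normedModType R) (f : V -> W) (Hf : linear f).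
Lemma lin0 : f 0 = 0.
Proof. by have := Hf (-1) 0 0; rewrite scaler0 addr0 scaleN1r addNr. Qed.
Lemma linZ a u : f (a *: u) = a *: f u.
Proof. by have := Hf a u 0; rewrite addr0 lin0 addr0. Qed.
Lemma linD u v : f (u + v) = f u + f v.
Proof. by have := Hf 1 u v; rewrite !scale1r. Qed.
Lemma linN u : f (- u) = - f u.
Proof. by rewrite -scaleN1r linZ scaleN1r. Qed.
Lemma linB u v : f (u - v) = f u - f v.
Proof. by rewrite linD linN. Qed.
Lemma lin_sum n (F : 'I_n -> V) : f (\sum_(i < n) F i) = \sum_(i < n) f (F i).
Proof.
elim: n F => [|n IH] F; first by rewrite !big_ord0 lin0.
by rewrite !big_ord_recr /= linD IH.
Qed.

Lemma lin_bounded : continuous f -> exists2 C, 0 < C & forall x, `|f x| <= C * `|x|.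
Proof.
move=> cf; have := cf 0 => /fcvgrPdist_lt /(_ 1 ltr01); rewrite lin0.
move=> /nbhs_ballP [e e0 He].
exists (2 / e); first by rewrite divr_gt0.
move=> x; have [->|x0] := eqVneq x 0; first by rewrite lin0 !normr0 mulr0.
have nx0 : 0 < `|x| by rewrite normr_gt0.
pose s := e / (2 * `|x|).
have s0 : 0 < s by rewrite /s divr_gt0 // mulr_gt0.
have : ball (0:V) e (s *: x).
  rewrite -ball_normE /ball_ /= sub0r normrN normrZ gtr0_norm // /s.
  rewrite -mulrA gtr_pMr // invfM -mulrA mulVf ?gt_eqF // mulr1.
  by rewrite invf_lt1 // ltr1n.
move=> /He /=; rewrite linZ sub0r normrN normrZ gtr0_norm // => H.
have H2 : `|f x| < s^-1 by rewrite -(ltr_pM2l s0) mulfV ?gt_eqF.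
apply: ltW; apply: (lt_le_trans H2); rewrite /s invfM invrK mulrC -mulrA.
by rewrite le_eqVlt; apply/orP; left; apply/eqP; ring.
Qed.
Lemma opnorm_le : continuous f -> forall x, `|f x| <= opnorm_on setT f * `|x|.
Proof.
move=> cf x; have [C C0 HC] := lin_bounded cf.
have [->|x0] := eqVneq x 0; first by rewrite lin0 !normr0 mulr0.
have nx0 : 0 < `|x| by rewrite normr_gt0.
rewrite -ler_pdivrMr //; apply: ub_le_sup; last by exists x.
exists C => r [y [_ y0] ->]; have ny0 : 0 < `|y| by rewrite normr_gt0.
by rewrite ler_pdivrMr.
Qed.
End Lin.

Lemma riesz (V : normedModType R) (K : V -> V) : linear K -> continuous K ->
  compact (closure (K @` ball 0 1)) -> (forall x, x - K x = 0 -> x = 0) ->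
  exists2 c, 0 < c & forall x, c * `|x| <= `|x - K x|.
Proof.
move=> HK cK cpt inj.
have [//|Hno] := pselect (exists2 c, 0 < c & forall x, c * `|x| <= `|x - K x|).
have Hk : forall k : nat, exists x : V, `|x| = 2^-1 /\ `|x - K x| < k.+1%:R^-1.
  move=> k; have c0 : 0 < k.+1%:R^-1 :> R by rewrite invr_gt0 ltr0n.
  have : ~ (forall x, k.+1%:R^-1 * `|x| <= `|x - K x|).
    by move=> H; apply: Hno; exists k.+1%:R^-1.
  move=> /existsNP [x /negP]; rewrite -ltNge => Hx.
  have x0 : x != 0.
    by apply/eqP => x0; move: Hx; rewrite x0 lin0 // subr0 !normr0 mulr0 ltxx.
  have nx0 : 0 < `|x| by rewrite normr_gt0.
  pose s := (2 * `|x|)^-1.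
  have s0 : 0 < s by rewrite /s invr_gt0 mulr_gt0.
  exists (s *: x); split.
    by rewrite normrZ gtr0_norm // /s invfM -mulrA mulVf ?gt_eqF // mulr1.
  rewrite linZ // -scalerBr normrZ gtr0_norm //.
  apply: (lt_trans (y := s * (k.+1%:R^-1 * `|x|))); first by rewrite ltr_pM2l.
  rewrite mulrCA /s invfM -mulrA mulVf ?gt_eqF // mulr1 gtr_pMr //.
  by rewrite invf_lt1 // ltr1n.
have [y Hy] := choice Hk.
pose F := (fun k => K (y k)) @ \oo.
have FS : F (closure (K @` ball 0 1)).
  exists 0%N => // k _ /=; apply: subset_closure; exists (y k) => //.
  rewrite -ball_normE /ball_ /= sub0r normrN (proj1 (Hy k)).
  by rewrite invf_lt1 // ltr1n.
have [z [_ Cz]] := cpt F _ FS.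
have Hcl : forall eta, 0 < eta -> forall N, exists k, (N <= k)%N /\ `|z - K (y k)| < eta.
  move=> eta eta0 N.
  have [] := Cz [set v | exists k, (N <= k)%N /\ v = K (y k)] (ball z eta).
  - by exists N => // k /= Nk; exists k.
  - exact: nbhsx_ballx.
  move=> v [[k [Nk ->]]]; rewrite -ball_normE /ball_ /= => Bv.
  by exists k.
have Hcomb : forall eta, 0 < eta -> exists k,
    `|z - K (y k)| < eta /\ `|y k - K (y k)| < eta.
  move=> eta eta0; have [N _ HN] := near_infty_natSinv_lt (PosNum eta0).
  have [k [Nk Hk1]] := Hcl eta eta0 N; exists k; split => //.
  exact: (lt_trans (proj2 (Hy k)) (HN k Nk)).
have zK : `|z - K z| = 0.
  apply/eqP; rewrite eq_le normr_ge0 andbT; apply/negP => /negP; rewrite -ltNge => d0.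
  set d := `|z - K z| in d0 *.
  have e0 : 0 < d / 3 by rewrite divr_gt0.
  have := cK z => /fcvgrPdist_lt /(_ _ e0) /nbhs_ballP [del del0 Hdel].
  have eta0 : 0 < Num.min (d / 3) (del / 2).
    by rewrite lt_min e0 divr_gt0.
  have [k [H1 H2]] := Hcomb _ eta0.
  move: H1 H2; rewrite !lt_min => /andP [H1 H1'] /andP [H2 H2'].
  have : ball z del (y k).
    rewrite -ball_normE /ball_ /=.
    apply: (le_lt_trans (ler_distD (K (y k)) _ _)).
    rewrite [`|K (y k) - _|]distrC.
    by rewrite (splitr del); apply: ltrD.
  move=> /Hdel /= H3.
  have : d < d.
    rewrite {1}/d; apply: (le_lt_trans (ler_distD (K (y k)) _ _)).
    have H3' : `|K (y k) - K z| < d / 3 by rewrite distrC.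
    apply: (lt_le_trans (ltrD H1 H3')).
    by lra.
  by rewrite ltxx.
have z0 : z = 0 by apply: inj; apply/normr0_eq0.
have q0 : 0 < 8^-1 :> R by rewrite invr_gt0.
have [k [H1 H2]] := Hcomb _ q0.
move: H1; rewrite z0 sub0r normrN => H1.
have : `|y k| < 2^-1.
  rewrite -[y k]subr0; apply: (le_lt_trans (ler_distD (K (y k)) _ _)).
  have H1' : `|K (y k) - 0| < 8^-1 by rewrite subr0.
  apply: (lt_le_trans (ltrD H2 H1')).
  by lra.
by rewrite (proj1 (Hy k)) ltxx.
Qed.

Lemma fd_surj (V W : normedModType R) (A : V -> W) (S : set V) (T : set W) m
  (b : 'I_m -> V) (b' : 'I_m -> W) :
  Defs.basis_of S b -> Defs.basis_of T b' -> linear A -> (forall x, S x -> T (A x)) ->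
  (forall x y, S x -> S y -> A x = A y -> x = y) ->
  forall y, T y -> exists2 x, S x & A x = y.
Proof.
move=> [bi bS] [bi' bT] HA maps inj.
have hS : forall c : 'I_m -> R, S (\sum_i c i *: b i) by move=> c; rewrite bS; exists c.
have S0 : S 0.
  by have := hS (fun=> 0); rewrite big1 // => i _; rewrite scale0r.
have Hc : forall i, exists c : 'I_m -> R, A (b i) = \sum_j c j *: b' j.
  move=> i; have : T (A (b i)).
    apply: maps; have := hS (fun j => (j == i)%:R).
    rewrite (bigD1 i) //= eqxx scale1r big1 ?addr0 // => j /negbTE ->.
    by rewrite scale0r.
  by rewrite bT => -[c _ Hc]; exists c; rewrite Hc.
have [M HM] := choice Hc.
pose Mx := \matrix_(i, j) M i j : 'M[R]_m.
have Key : forall c : 'rV[R]_m,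
    A (\sum_i c 0 i *: b i) = \sum_j (c *m Mx) 0 j *: b' j.
  move=> c; rewrite lin_sum //.
  under eq_bigr do rewrite linZ // HM scaler_sumr.
  rewrite exchange_big /=; apply: eq_bigr => j _.
  rewrite mxE scaler_suml; apply: eq_bigr => i _.
  by rewrite mxE scalerA.
have : row_free Mx.
  apply: inj_row_free => v Hv.
  have H0 : A (\sum_i v 0 i *: b i) = A 0.
    rewrite Key Hv lin0 // big1 // => j _; by rewrite mxE scale0r.
  have := inj _ _ (hS (fun i => v 0 i)) S0 H0 => /bi Hvi.
  by apply/rowP => i; rewrite mxE Hvi.
rewrite row_free_unit => Mu.
move=> y; rewrite bT => -[d _ <-].
pose c := (\row_j d j) *m invmx Mx.
exists (\sum_i c 0 i *: b i); first exact: (hS (fun i => c 0 i)).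
rewrite Key -mulmxA mulVmx // mulmx1; apply: eq_bigr => j _.
by rewrite mxE.
Qed.

Lemma sum_cont (W : normedModType R) m n (F : 'I_n -> 'rV[R]_m -> W) :
  (forall i, continuous (F i)) -> continuous (fun c => \sum_(i < n) F i c).
Proof.
elim: n F => [|n IH] F HF.
  by under eq_fun do rewrite big_ord0; exact: cst_continuous.
under eq_fun do rewrite big_ord_recr /=.
move=> x; apply: (@continuousD _ _ _ (fun c => \sum_(i < n) F (widen_ord (leqnSn n) i) c) (F ord_max)).
  by apply: IH => i; exact: HF.
exact: HF.
Qed.

Lemma mx_coord_le m (c : 'rV[R]_m) i : `|c 0 i| <= `|c|.
Proof.
have -> : `|c| = mx_norm c by [].
rewrite mx_normrE.
exact: (le_bigmax _ (fun ij : 'I_1 * 'I_m => `|c ij.1 ij.2|) (0, i)).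
Qed.

Lemma fd_bound (V W : normedModType R) (A : V -> W) (S : set V) m
  (b : 'I_m -> V) :
  Defs.basis_of S b -> linear A ->
  (forall x y, S x -> S y -> A x = A y -> x = y) ->
  exists C, forall x, S x -> `|x| <= C * `|A x|.
Proof.
move=> [bi bS] HA inj.
have hS : forall c : 'I_m -> R, S (\sum_i c i *: b i) by move=> c; rewrite bS; exists c.
have S0 : S 0.
  by have := hS (fun=> 0); rewrite big1 // => i _; rewrite scale0r.
pose g (c : 'rV[R]_m) := \sum_i c 0 i *: b i.
pose h (c : 'rV[R]_m) := `|A (g c)|.
pose Sb := \sum_i `|b i|.
have Sb0 : 0 <= Sb by apply: sumr_ge0 => i _.
have gle : forall c, `|g c| <= Sb * `|c|.
  move=> c; apply: (le_trans (ler_norm_sum _ _ _)).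
  rewrite /Sb mulr_suml; apply: ler_sum => i _.
  by rewrite normrZ mulrC ler_wpM2l // mx_coord_le.
have hE : forall c, h c = `|\sum_i c 0 i *: A (b i)|.
  move=> c; rewrite /h /g lin_sum //; congr `|_|; apply: eq_bigr => i _.
  by rewrite linZ.
have hcont : continuous h.
  have -> : h = (fun c => `|\sum_i c 0 i *: A (b i)|) by apply: funext => c; rewrite hE.
  move=> c; apply: continuous_comp; last exact: norm_continuous.
  apply: (@sum_cont _ m m (fun i c => c 0 i *: A (b i))) => i x.
  by apply: continuousZl; exact: coord_continuous.
pose S1 := [set c : 'rV[R]_m | `|c| = 1].
have cS1 : compact S1.
  apply: bounded_closed_compact.
    exists 1; split; first exact: num_real.
    by move=> M M1 c /= ->; exact: ltW.
  have -> : S1 = (@Num.Def.normr R 'rV[R]_m) @^-1` [set 1 : R] by [].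
  apply: (continuous_closedP _).1; first exact: norm_continuous.
  exact: closed_eq.
have cI : compact (h @` S1).
  by apply: continuous_compact => //; exact: continuous_subspaceT.
have clI : closed (h @` S1) by apply: compact_closed => //; exact: Rhausdorff.
have nI : ~ (h @` S1) 0.
  move=> [c S1c hc0].
  have : A (g c) = A 0 by rewrite lin0 //; apply/normr0_eq0.
  move=> /(inj _ _ (hS _) S0) /bi Hc.
  have c0 : c = 0 by apply/rowP => i; rewrite mxE Hc.
  by move: S1c; rewrite /S1 /= c0 normr0 => /esym/eqP; rewrite oner_eq0.
have : nbhs (0 : R) (~` (h @` S1)) by apply: open_nbhs_nbhs; split => //; exact: closed_openC.
move=> /nbhs_ballP [e e0 He].
have hge : forall c, S1 c -> e <= h c.
  move=> c S1c; rewrite leNgt; apply/negP => hce.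
  have : ball (0:R) e (h c).
    by rewrite -ball_normE /ball_ /= sub0r normrN ger0_norm // /h normr_ge0.
  by move=> /He; apply; exists c.
exists (Sb / e) => x; rewrite bS => -[c' _ <-].
pose c := \row_i c' i : 'rV[R]_m.
have gc : g c = \sum_i c' i *: b i by apply: eq_bigr => i _; rewrite mxE.
rewrite -gc.
have [->|cn0] := eqVneq c 0.
  have -> : g 0 = 0 by rewrite /g big1 // => i _; rewrite mxE scale0r.
  by rewrite normr0 mulr_ge0 // divr_ge0 // ltW.
have nc0 : 0 < `|c| by rewrite normr_gt0.
have S1u : S1 (`|c|^-1 *: c) by rewrite /S1 /= normrZ normrV ?unitfE ?gt_eqF // normr_id mulVf ?gt_eqF.
have := hge _ S1u.
have -> : h (`|c|^-1 *: c) = `|c|^-1 * h c.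
  rewrite !hE.
  rewrite -[`|c|^-1]ger0_norm ?invr_ge0 ?normr_ge0 // -normrZ scaler_sumr.
  congr `|_|; apply: eq_bigr => i _; by rewrite mxE scalerA ger0_norm // invr_ge0 normr_ge0.
move=> Hh.
apply: (le_trans (gle c)).
have : e * `|c| <= h c by rewrite -ler_pdivlMr // mulrC.
move=> H2.
rewrite -mulrA ler_wpM2l // ler_pdivlMl //.
Qed.
End Helpers.
Arguments lin0 {R V W f} Hf.
Arguments linZ {R V W f} Hf.
Arguments linD {R V W f} Hf.
Arguments linN {R V W f} Hf.
Arguments linB {R V W f} Hf.
Arguments lin_sum {R V W f} Hf.
Arguments opnorm_le {R V W f} Hf.
Arguments riesz {R V K}.
Arguments fd_surj {R V W A S T m b b'}.
Arguments fd_bound {R V W A S m b}.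

Theorem theoremt (R : realType) (V W : completeNormedModType R)
  (PV : nat -> V -> V) (PW : nat -> W -> W)
  (L L0 L1 : V -> W) (Nr N0 N1 : W -> V)
  (N1N : nat -> W -> V) (KN : nat -> V -> V) (K : V -> V)
  (W' : set W) (IW : nat -> W -> W) :
  separable V -> separable W ->
  fd_proj_family PV -> fd_proj_family PW ->
  (* L admissible, invertible, with invertible left-Fredholm regulator Nr *)
  admissible PV PW L L0 L1 Nr N0 N1 ->
  bounded_linear L -> bij_between L setT setT ->
  bounded_linear Nr -> bij_between Nr setT setT ->
  compact_op K -> (forall x, Nr (L x) = x - K x) ->
  (* the truncated regulators *)
  (forall n, linear (N1N n) /\
     (forall y, range (PW n) y -> range (PV n) (N1N n y))) ->
  (forall n, bounded_linear (KN n)) ->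
  (forall n u, range (PV n) u ->
     N0 (L0 u + PW n (L1 u)) + N1N n (L0 u + PW n (L1 u)) = u - KN n u) ->
  (fun n => opnorm_on setT (fun x => KN n x - K x)) @ \oo --> (0 : R) ->
  (forall n, same_dim (range (PV n)) (range (PW n))) ->
  (* the dense subspace W' and the projections IW *)
  lin_subspace W' -> dense W' ->
  (forall n, linear (IW n)) ->
  (forall n u, W' u -> IW n (IW n u) = IW n u) ->
  (forall u, W' u -> (fun n => `|u - IW n u|) @ \oo --> (0 : R)) ->
  (forall n, IW n @` W' = range (PW n)) ->
  (* invertibility for sufficiently large N *)
  (exists M, forall n, (M <= n)%N ->
     bij_between (fun u => L0 u + IW n (L1 u)) (range (PV n)) (range (PW n))) ->
  exists M, forall n, (M <= n)%N ->
    bij_between (fun u => L0 u + PW n (L1 u)) (range (PV n)) (range (PW n)) /\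
    (bij_between (fun u => L0 u + IW n (L1 u)) (range (PV n)) (range (PW n)) ->
     forall f, W' f ->
     forall uN v, range (PV n) uN -> L0 uN + PW n (L1 uN) = PW n f ->
       range (PV n) v -> L0 v + IW n (L1 v) = IW n f ->
       `|uN - v| <=
         inv_opnorm (fun u => L0 u + IW n (L1 u)) (range (PV n)) (IW n @` W') *
         `|IW n (f - L1 uN) - PW n (f - L1 uN)|).

Proof.
move=> sepV sepW fdPV fdPW adm bL bijL bNr bijNr cK NrL N1Nh KNb KNeq KNcvg samed
  W'sub W'dense IWlin IWproj IWcvg IWrange IWbij.
case: adm => -[linL0 linL1 Ldec L0comm] [_ [linN0 linN1 Nrdec N0comm]].
have [linK contK] := cK.1.
have injK : forall x, x - K x = 0 -> x = 0.
  move=> x Hx.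
  have H1 : Nr (L x) = Nr (L 0) by rewrite !NrL Hx lin0 // subr0.
  case: bijNr => _ _ /(_ _ _ I I H1) H2.
  by case: bijL => _ _ /(_ _ _ I I H2).
have [c c0 Hc] := riesz linK contK cK.2 injK.
have c20 : 0 < c / 2 by rewrite divr_gt0.
have [M _ HM] := (fcvgrPdist_lt _).1 KNcvg _ c20.
exists M => n /HM /= Hop.
have [linPV _ _ _] := fdPV n.
have [linPW _ _ _] := fdPW n.
have lPV := linPV.1; have lPW := linPW.1.
have rgB : forall x y, range (PV n) x -> range (PV n) y -> range (PV n) (x - y).
  by move=> x y [a _ <-] [b _ <-]; exists (a - b) => //; rewrite linB.
have rg0 : range (PV n) 0 by exists 0 => //; rewrite lin0.
have rgW : forall x y, range (PW n) x -> range (PW n) y -> range (PW n) (x + y).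
  by move=> x y [a _ <-] [b _ <-]; exists (a + b) => //; rewrite linD.
have linB0 : linear (fun u => L0 u + PW n (L1 u)).
  move=> a u v /=; rewrite linL0 linL1 lPW scalerDr -!addrA; congr (_ + _).
  by rewrite addrCA.
have mapsB : forall x, range (PV n) x -> range (PW n) (L0 x + PW n (L1 x)).
  move=> x [a _ <-]; apply: rgW; first by exists (L0 a) => //; rewrite L0comm.
  by exists (L1 (PV n a)).
have injB : forall x y, range (PV n) x -> range (PV n) y ->
    L0 x + PW n (L1 x) = L0 y + PW n (L1 y) -> x = y.
  move=> x y rx ry Hxy; apply/eqP; rewrite -subr_eq0; apply/eqP.
  set w := x - y.
  have Bw : L0 w + PW n (L1 w) = 0.
    by rewrite /w (linB linL0) (linB linL1) (linB lPW) addrACA -opprD Hxy subrr.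
  have := KNeq n w (rgB _ _ rx ry); rewrite Bw (lin0 linN0) (lin0 (N1Nh n).1) addr0.
  move=> /esym Hw.
  have linT : linear (fun x => KN n x - K x).
    move=> a u v /=; rewrite (KNb n).1 linK scalerBr -!addrA; congr (_ + _).
    by rewrite opprD addrCA.
  have contT : continuous (fun x => KN n x - K x).
    by move=> x0; apply: continuousB; [exact: (KNb n).2 | exact: contK].
  have Hle := opnorm_le linT contT w.
  have : c * `|w| <= c / 2 * `|w|.
    apply: (le_trans (Hc w)).
    have -> : w - K w = KN n w - K w by rewrite -(subr0_eq Hw).
    apply: (le_trans Hle); apply: ler_wpM2r => //.
    by apply: ltW; apply: le_lt_trans Hop; rewrite sub0r normrN ler_norm.
  move=> H; apply/normr0_eq0/eqP; rewrite eq_le normr_ge0 andbT.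
  by move: H; rewrite -subr_ge0 -mulrBl; nra.
split.
  have [m [b [b' [bb bb']]]] := samed n.
  split => //.
  exact: (fd_surj bb bb' linB0 mapsB injB).
move=> bijA f W'f uN v ruN HuN rv Hv.
have linA : linear (fun u => L0 u + IW n (L1 u)).
  move=> a u v0 /=; rewrite linL0 linL1 IWlin scalerDr -!addrA; congr (_ + _).
  by rewrite addrCA.
case: bijA => mapsA _ injA.
set w := uN - v.
have rw : range (PV n) w := rgB _ _ ruN rv.
have Aw : L0 w + IW n (L1 w) = - (IW n (f - L1 uN) - PW n (f - L1 uN)).
  have L0u : L0 uN = PW n f - PW n (L1 uN) by rewrite -HuN addrK.
  rewrite /w (linB linL0) (linB linL1) (linB (IWlin n)) addrACA -opprD Hv L0u.
  rewrite (linB (IWlin n)) (linB lPW).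
  by rewrite !opprB addrA.
rewrite -[`|IW n _ - _|]normrN -Aw.
have [Aw0|Awn0] := eqVneq (L0 w + IW n (L1 w)) 0.
  have w0 : w = 0.
    apply: injA => //=; rewrite (lin0 linL0) (lin0 linL1) (lin0 (IWlin n)) addr0; exact: Aw0.
  by rewrite Aw0 w0 !normr0 mulr0.
have [m [b [b' [bb bb']]]] := samed n.
have [C HC] := fd_bound bb linA injA.
rewrite -ler_pdivrMr ?normr_gt0 //; apply: ub_le_sup.
  exists C => r [x [y [rx _ y0 Axy ->]]].
  rewrite ler_pdivrMr ?normr_gt0 // -Axy; exact: HC.
exists w, (L0 w + IW n (L1 w)); split => //.
by rewrite IWrange; apply: mapsA.
Qed.
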